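(* Let $G=(V,E)$ be a finite graph, $\varepsilon$ an orientation of $G$, $q$ a positive integer, and $f_1,f_2\in F(G,\varepsilon;q)$. If $f_1(e)\equiv f_2(e)\pmod q$ for all $e\in E$, then the orientations $\varepsilon_{f_1}$ and $\varepsilon_{f_2}$ are Eulerian equivalent.
   Context: An orientation assigns each edge (including loops) one of its two directions; $\varepsilon(v,e)=1$ ($-1$) if non-loop $e$ points out of (into) end-vertex $v$, $0$ otherwise. $F(G,\varepsilon;q)=\{f:E\to\mathbb R: \sum_e m_{v,e}f(e)=0\ \forall v,\ |f(e)|<q\ \forall e\}$, where $m_{v,e}=\varepsilon(v,e)$ for non-loops and $0$ for loops (real $q$-flows). For $f:E\to\mathbb R$, $\varepsilon_f$ is the orientation that agrees with $\varepsilon$ on edges $e$ with $f(e)>0$ and is opposite to $\varepsilon$ on edges with $f(e)\le0$. Two orientations are Eulerian equivalent if the spanning subgraph formed by the edges on which they differ is directed Eulerian (in-degree equals out-degree at every vertex, a loop contributing one of each) with respect to either of them. *)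

(* Defs.v *)
From mathcomp Require Import all_boot all_order all_algebra.
Set Implicit Arguments. Unset Strict Implicit. Unset Printing Implicit Defensive.
Import Order.TTheory GRing.Theory Num.Theory.
Local Open Scope ring_scope.

(* A finite graph (multigraph, loops allowed) with vertex set V and edge set E:
   each edge e has two end-vertices, listed as the pair [ends e].
   An orientation is a map [o : E -> bool]: [o e = true] means e points from
   (ends e).1 to (ends e).2, [o e = false] means the opposite direction. *)

Definition tail (V E : finType) (ends : E -> V * V) (o : E -> bool) (e : E) : V :=
  if o e then (ends e).1 else (ends e).2.
Definition head (V E : finType) (ends : E -> V * V) (o : E -> bool) (e : E) : V :=
  if o e then (ends e).2 else (ends e).1.

Definition is_loop (V E : finType) (ends : E -> V * V) (e : E) : bool :=
  (ends e).1 == (ends e).2.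

Definition inc_sign (R : numDomainType) (V E : finType) (ends : E -> V * V)
  (o : E -> bool) (v : V) (e : E) : R :=
  if is_loop ends e then 0
  else if tail ends o e == v then 1
  else if head ends o e == v then -1
  else 0.

Definition real_qflow (R : realFieldType) (V E : finType) (ends : E -> V * V)
  (o : E -> bool) (q : R) (f : E -> R) : Prop :=
  (forall v : V, \sum_(e : E) inc_sign R ends o v e * f e = 0) /\
  (forall e : E, `|f e| < q).

Definition orient_of (R : realFieldType) (E : finType) (o : E -> bool) (f : E -> R)
  : E -> bool :=
  fun e => if 0 < f e then o e else ~~ o e.

(* The edge set D is directed Eulerian w.r.t. orientation o: at every vertex
   in-degree equals out-degree (a loop counts once as outgoing and once as
   incoming). *)
Definition directed_eulerian (V E : finType) (ends : E -> V * V)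
  (o : E -> bool) (D : {set E}) : Prop :=
  forall v : V, #|[set e in D | tail ends o e == v]| = #|[set e in D | head ends o e == v]|.

(* Eulerian equivalence: the edges on which o1 and o2 differ form a directed
   Eulerian subgraph (w.r.t. o1; equivalently w.r.t. o2, which reverses them). *)
Definition eulerian_equiv (V E : finType) (ends : E -> V * V) (o1 o2 : E -> bool) : Prop :=
  directed_eulerian ends o1 [set e | o1 e != o2 e].

(* Main.v *)
Require Import Defs.
From mathcomp Require Import all_boot all_order all_algebra.
From mathcomp Require Import ring lra zify.
Import Order.TTheory GRing.Theory Num.Theory.
Local Open Scope ring_scope.

Lemma inc_sign_split (R : numDomainType) (V E : finType) (ends : E -> V * V)
  (o : E -> bool) (v : V) (e : E) :
  inc_sign R ends o v e = ((Defs.tail ends o e == v)%:R - (Defs.head ends o e == v)%:R).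
Proof.
rewrite /inc_sign /is_loop /Defs.tail /Defs.head.
case: (o e); case: (ends e) => a b /=; (have [->|ne] := eqVneq a b; first by rewrite subrr);
  (case: eqP => ea; case: eqP => eb; rewrite ?subrr ?subr0 ?sub0r //);
  by move: ne; rewrite ea eb eqxx.
Qed.



Lemma sum_bool_card (R : numDomainType) (E : finType) (D : {set E}) (P : pred E) :
  \sum_(e in D) ((P e)%:R : R) = (#|[set e in D | P e]|)%:R.
Proof.
rewrite -natr_sum; congr (_%:R).
rewrite -sum1_card big_mkcond [RHS]big_mkcond /=; apply: eq_bigr => e _.
by rewrite !inE; case: (e \in D); case: (P e).
Qed.

Lemma edge_sign (R : numDomainType) (V E : finType) (ends : E -> V * V)
  (o o' : E -> bool) (v : V) (e : E) (q : R) :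
  inc_sign R ends o v e * (if o' e == o e then q else - q) = q * inc_sign R ends o' v e.
Proof.
rewrite !inc_sign_split /Defs.tail /Defs.head.
case: (o e); case: (o' e) => /=; rewrite mulrC //.
all: by rewrite mulNr -mulrN opprB.
Qed.

Lemma edge_val (R : realFieldType) (E : finType) (eps : E -> bool) (q : nat)
  (f1 f2 : E -> R) (e : E) :
  (0 < q)%N -> `|f1 e| < q%:R -> `|f2 e| < q%:R ->
  (exists k : int, f1 e - f2 e = k%:~R * q%:R) ->
  f1 e - f2 e = if orient_of eps f1 e != orient_of eps f2 e then
     (if orient_of eps f1 e == eps e then q%:R else - q%:R) else 0.
Proof.
move=> q0 /ltr_normlP [h1 h1'] /ltr_normlP [h2 h2'] [k hk].
have qp : (0 : R) < q%:R by rewrite ltr0n.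
have kl : (k%:~R : R) < 2%:~R by nra.
have kg : (-2)%:~R < (k%:~R : R) by rewrite mulrNz; nra.
rewrite ltr_int in kl; rewrite ltr_int in kg.
have : k = -1 \/ k = 0 \/ k = 1 by lia.
rewrite /orient_of.
case=> [|[]] kE; rewrite kE ?mul1r ?mul0r ?mulN1r in hk;
case: (ltrP 0 (f1 e)) => p1; case: (ltrP 0 (f2 e)) => p2;
case: (eps e) => /=; try lra.
Qed.

Theorem lemma5p3 (R : realFieldType) (V E : finType) (ends : E -> V * V)
  (eps : E -> bool) (q : nat) (f1 f2 : E -> R) :
  (0 < q)%N ->
  real_qflow ends eps q%:R f1 ->
  real_qflow ends eps q%:R f2 ->
  (forall e : E, exists k : int, f1 e - f2 e = k%:~R * q%:R) ->
  eulerian_equiv ends (orient_of eps f1) (orient_of eps f2).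
Proof.
move=> q0 [fl1 b1] [fl2 b2] hk v.
set o1 := orient_of eps f1; set D := [set e | o1 e != orient_of eps f2 e].
have qp : (0 : R) < q%:R by rewrite ltr0n.
have key : \sum_(e : E) inc_sign R ends eps v e * (f1 e - f2 e) = 0.
  under eq_bigr do rewrite mulrBr.
  by rewrite sumrB fl1 fl2 subrr.
have key2 : \sum_(e in D) inc_sign R ends o1 v e = 0.
  apply: (mulfI (lt0r_neq0 qp)); rewrite mulr0 mulr_sumr -[RHS]key.
  rewrite [RHS](bigID (fun e => e \in D)) /= [X in _ = _ + X]big1 ?addr0.
    apply: eq_bigr => e eD; rewrite (@edge_val R E eps q f1 f2 e q0 (b1 e) (b2 e) (hk e)).
    by move: eD; rewrite inE => ->; rewrite edge_sign.
  move=> e eD; rewrite (@edge_val R E eps q f1 f2 e q0 (b1 e) (b2 e) (hk e)).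
  by move: eD; rewrite inE => /negbTE ->; rewrite mulr0.
move: key2; under eq_bigr do rewrite inc_sign_split.
rewrite sumrB !sum_bool_card => /eqP; rewrite subr_eq0 eqr_nat => /eqP.
by [].
Qed.
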